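(* Let $\Omega$ be the sojourn time of an arbitrary batch in the stationary regime, i.e. the random variable whose Laplace transform is $$\mathbb{E}(e^{-s\Omega})=\sum_{n=0}^\infty\sum_{b=1}^\infty e^*_{n,b}(s)\,\mathbb{P}(N=n)\,\mathbb{P}(B=b),$$ where $B$ is the geometric batch size and $N$ (independent of $B$) has the stationary distribution $\mathbb{P}(N=0)=1-\frac{\rho}{1-q}$ and $\mathbb{P}(N=n)=\left(1-\frac{\rho}{1-q}\right)\rho(\rho+q)^{n-1}$ for $n\ge1$. Then for $\Re(s)\ge0$, $$\mathbb{E}(e^{-s\Omega})=\frac{1-\rho-q}{q(\rho+q)}\left(\rho^2F(s;\rho+q,q)+\frac{q^3+\rho\,(qs+\rho+2q(1-q))\,E(s;q,q)}{q+\rho+qs-q^2}\right).$$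
   Context: Queueing model: an $M^{[X]}/M/1$ processor-sharing queue. Batches of jobs arrive according to a Poisson process with rate $\rho>0$; each job requires an exponentially distributed amount of service with mean $1$; the server has unit capacity, shared equally among all jobs present (processor sharing); interarrival times, batch sizes and service requirements are mutually independent. Batch sizes are geometric: $\mathbb{P}(B=b)=(1-q)q^{b-1}$, $b\ge1$, where $q\in(0,1)$ and $\rho+q<1$. For $n\ge0$, $b\ge1$, $\Omega_{n,b}$ denotes the sojourn time of a tagged batch (time between its arrival and the departure of the last of its jobs) given that $n$ jobs are in the system at its arrival and that the batch contains $b$ jobs, and $e^*_{n,b}(s)=\mathbb{E}(e^{-s\Omega_{n,b}})$ for $\Re(s)\ge0$. Let $\mathbb{D}=\{u\in\mathbb{C}:|u|<1\}$ and $E(s;u,v)=\sum_{n\ge0}\sum_{b\ge1}e^*_{n,b}(s)u^nv^b$ for $(u,v)\in\mathbb{D}^2$. Define $F(s;u,v)=\frac{E(s;u,v)-E(s;q,v)}{u-q}$ for $u\in\mathbb{D}\setminus\{q\}$ and $F(s;q,v)=\frac{\partial E}{\partial u}(s;q,v)$. *)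

(* Defs.v *)
From Stdlib Require Import Reals ClassicalEpsilon.
From Coquelicot Require Import Coquelicot.
Open Scope R_scope.

(* Sum of a complex series, taken componentwise (all series used below are
   absolutely convergent, so this is the usual sum). *)
Definition CSeries (a : nat -> C) : C :=
  (Series (fun k => Re (a k)), Series (fun k => Im (a k))).

(* Uniformized embedded jump chain of the tagged-batch process.
   State (n, b): n other jobs, b remaining jobs of the tagged batch.
   While b >= 1 the total event rate is rho + 1 (batch arrivals at rate rho,
   service completions at rate 1 since the server is busy); a batch arrival
   adds j >= 1 other jobs with probability (1-q) q^(j-1); a completion is a
   tagged job with probability b/(n+b), another job with probability n/(n+b).
   absorb rho q k n b = P(the chain started at (n,b) reaches b = 0 at exactly
   jump number k). *)
Fixpoint absorb (rho q : R) (k : nat) : nat -> nat -> R :=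
  match k with
  | O => fun n b => match b with O => 1 | S _ => 0 end
  | S k' => fun n b =>
      match b with
      | O => 0
      | S b' =>
          rho / (1 + rho) *
            Series (fun j => (1 - q) * q ^ j * absorb rho q k' (n + S j)%nat b)
          + 1 / (1 + rho) *
            (INR n / INR (n + b) * absorb rho q k' (Nat.pred n) b
             + INR b / INR (n + b) * absorb rho q k' n b')
      end
  end.

(* e*_{n,b}(s) = E exp(-s Omega_{n,b}).  Omega_{n,b} is the sum of K i.i.d.
   Exp(1+rho) holding times, K the absorption time of the jump chain above,
   independent of the holding times; hence
   E e^{-s Omega} = sum_k P(K = k) ((1+rho)/(1+rho+s))^k. *)
Definition estar (rho q : R) (s : C) (n b : nat) : C :=
  CSeries (fun k =>
    (RtoC (absorb rho q k n b) * Cpow (RtoC (1 + rho) / (RtoC (1 + rho) + s)) k)%C).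

Definition Egen (rho q : R) (s u v : C) : C :=
  CSeries (fun n => CSeries (fun b =>
    (estar rho q s n (S b) * Cpow u n * Cpow v (S b))%C)).

Definition Fgen (rho q : R) (s u v : C) : C :=
  if excluded_middle_informative (u = RtoC q)
  then C_derive (fun w => Egen rho q s w v) (RtoC q)
  else ((Egen rho q s u v - Egen rho q s (RtoC q) v) / (u - RtoC q))%C.

Definition probN (rho q : R) (n : nat) : R :=
  match n with
  | O => 1 - rho / (1 - q)
  | S m => (1 - rho / (1 - q)) * rho * (rho + q) ^ m
  end.

Definition probB (q : R) (b : nat) : R :=
  match b with
  | O => 0
  | S m => (1 - q) * q ^ m
  end.

Definition sojournLT (rho q : R) (s : C) : C :=
  CSeries (fun n => CSeries (fun b =>
    (estar rho q s n (S b) * RtoC (probN rho q n) * RtoC (probB q (S b)))%C)).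

(* Main.v *)
Require Import Defs.
From Stdlib Require Import Reals Lra Lia FunctionalExtensionality ClassicalEpsilon.
From Coquelicot Require Import Coquelicot.
Open Scope R_scope.

Lemma sum_n_mono (u : nat -> R) N n : (forall k, 0 <= u k) -> (N <= n)%nat -> sum_n u N <= sum_n u n.
Proof.
  intros Hu H. induction H. lra.
  rewrite sum_Sn. unfold plus; simpl. specialize (Hu (S m)). lra.
Qed.

Lemma ser_bound (u : nat -> R) L : (forall k, 0 <= u k) -> (forall N, sum_n u N <= L) ->
  ex_series u /\ Series u <= L.
Proof.
  intros Hu HL.
  destruct (ex_finite_lim_seq_incr (sum_n u) L) as [l Hl].
  - intros n. rewrite sum_Sn. unfold plus; simpl. specialize (Hu (S n)). lra.
  - exact HL.
  - assert (Hs : is_series u l) by exact Hl.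
    split. exists l; exact Hs.
    rewrite (is_series_unique _ _ Hs).
    assert (H := is_lim_seq_le (sum_n u) (fun _ => L) l L HL Hl (is_lim_seq_const L)).
    simpl in H. exact H.
Qed.

Lemma ser_ge_partial (u : nat -> R) N : (forall k, 0 <= u k) -> ex_series u -> sum_n u N <= Series u.
Proof.
  intros Hu [l Hl].
  rewrite (is_series_unique _ _ Hl).
  assert (H := is_lim_seq_le_loc (fun _ => sum_n u N) (sum_n u) (sum_n u N) l).
  simpl in H. apply H.
  - exists N. intros n Hn. apply sum_n_mono; auto.
  - apply is_lim_seq_const.
  - exact Hl.
Qed.

Lemma ser_nonneg (u : nat -> R) : (forall k, 0 <= u k) -> ex_series u -> 0 <= Series u.
Proof.
  intros Hu He. eapply Rle_trans; [|apply (ser_ge_partial u 0); auto].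
  rewrite sum_O. auto.
Qed.

Lemma sum_n_le (u v : nat -> R) N : (forall k, u k <= v k) -> sum_n u N <= sum_n v N.
Proof.
  intros H. induction N. rewrite !sum_O; auto.
  rewrite !sum_Sn. unfold plus; simpl. specialize (H (S N)). lra.
Qed.

Lemma sum_swap (b : nat -> nat -> R) J K :
  sum_n (fun j => sum_n (fun k => b j k) K) J = sum_n (fun k => sum_n (fun j => b j k) J) K.
Proof.
  induction J.
  - rewrite sum_O. apply sum_n_ext. intros k. rewrite sum_O. reflexivity.
  - rewrite sum_Sn, IHJ.
    rewrite (sum_n_ext (fun k => sum_n (fun j => b j k) (S J)) (fun k => plus (sum_n (fun j => b j k) J) (b (S J) k))).
    + rewrite sum_n_plus. reflexivity.
    + intros k. rewrite sum_Sn. reflexivity.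
Qed.

Lemma Series_sum_n (b : nat -> nat -> R) K : (forall k, (k <= K)%nat -> ex_series (fun j => b j k)) ->
  ex_series (fun j => sum_n (b j) K) /\
  Series (fun j => sum_n (b j) K) = sum_n (fun k => Series (fun j => b j k)) K.
Proof.
  intros H. induction K.
  - rewrite sum_O. split.
    + eapply ex_series_ext; [|apply (H 0%nat); lia]. intros j; rewrite sum_O; auto.
    + apply Series_ext. intros j; rewrite sum_O; auto.
  - destruct IHK as [IH1 IH2]. intros k Hk; apply H; lia.
    assert (E : forall j, sum_n (b j) (S K) = sum_n (b j) K + b j (S K)).
    { intros j. rewrite sum_Sn. reflexivity. }
    split.
    + eapply ex_series_ext; [intros j; symmetry; apply E|].
      apply (ex_series_plus _ _ IH1 (H (S K) (le_n _))).
    + rewrite (Series_ext _ _ E), Series_plus; auto.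
      rewrite IH2, sum_Sn. reflexivity.
Qed.

Lemma term_le_series (u : nat -> R) k : (forall k, 0 <= u k) -> ex_series u -> u k <= Series u.
Proof.
  intros Hu He. eapply Rle_trans; [|apply (ser_ge_partial _ k); auto].
  destruct k. rewrite sum_O; lra.
  rewrite sum_Sn. unfold plus; simpl.
  assert (0 <= sum_n u k).
  { eapply Rle_trans; [|apply (sum_n_mono _ 0 k); auto; lia]. rewrite sum_O; auto. }
  lra.
Qed.

Lemma tonelli_half (b : nat -> nat -> R) :
  (forall j k, 0 <= b j k) -> (forall j, ex_series (b j)) -> ex_series (fun j => Series (b j)) ->
  (forall k, ex_series (fun j => b j k)) /\ ex_series (fun k => Series (fun j => b j k)) /\
  Series (fun k => Series (fun j => b j k)) <= Series (fun j => Series (b j)).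
Proof.
  intros Hb Hr Ho.
  assert (Hn : forall j, 0 <= Series (b j)) by (intros; apply ser_nonneg; auto).
  assert (H1 : forall k, ex_series (fun j => b j k)).
  { intros k. apply (ser_bound _ (Series (fun j => Series (b j)))); auto.
    intros J. eapply Rle_trans; [|apply (ser_ge_partial _ J); auto].
    apply sum_n_le. intros j. apply term_le_series; auto. }
  assert (H2 := ser_bound (fun k => Series (fun j => b j k)) (Series (fun j => Series (b j)))).
  destruct H2 as [H2a H2b].
  - intros k. apply ser_nonneg; auto.
  - intros K. destruct (Series_sum_n b K (fun k _ => H1 k)) as [Ha Hb'].
    rewrite <- Hb'. apply Series_le; auto.
    intros j. split.
    + eapply Rle_trans; [|apply (sum_n_mono _ 0 K); auto; lia]. rewrite sum_O; auto.
    + apply ser_ge_partial; auto.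
  - split; auto.
Qed.

Lemma tonelli (b : nat -> nat -> R) :
  (forall j k, 0 <= b j k) -> (forall j, ex_series (b j)) -> ex_series (fun j => Series (b j)) ->
  (forall k, ex_series (fun j => b j k)) /\ ex_series (fun k => Series (fun j => b j k)) /\
  Series (fun k => Series (fun j => b j k)) = Series (fun j => Series (b j)).
Proof.
  intros Hb Hr Ho.
  destruct (tonelli_half b Hb Hr Ho) as [H1 [H2 H3]].
  destruct (tonelli_half (fun k j => b j k)) as [_ [_ H4]]; auto.
  split; auto. split; auto. apply Rle_antisym; auto.
Qed.

Lemma exR_le (a b : nat -> R) : (forall n, Rabs (a n) <= b n) -> ex_series b -> ex_series a.
Proof.
  intros H Hb. apply (@ex_series_le R_AbsRing R_CompleteNormedModule a b); auto.
Qed.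

Lemma fubini (a M : nat -> nat -> R) :
  (forall j k, Rabs (a j k) <= M j k) -> (forall j, ex_series (M j)) -> ex_series (fun j => Series (M j)) ->
  Series (fun k => Series (fun j => a j k)) = Series (fun j => Series (a j)).
Proof.
  intros Ha Hr Ho.
  assert (HM : forall j k, 0 <= M j k) by (intros j k; eapply Rle_trans; [apply Rabs_pos|apply Ha]).
  assert (Hra : forall j, ex_series (a j)).
  { intros j. eapply exR_le; [|apply (Hr j)]. apply Ha. }
  set (b := fun j k => a j k + M j k).
  assert (Hb : forall j k, 0 <= b j k).
  { intros j k. unfold b. specialize (Ha j k). apply Rabs_le_between in Ha. lra. }
  assert (Hbr : forall j, ex_series (b j)) by (intros j; apply (ex_series_plus _ _ (Hra j) (Hr j))).
  assert (Hao : ex_series (fun j => Series (a j))).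
  { eapply exR_le; [|apply Ho].
    intros j. eapply Rle_trans. apply Series_Rabs.
    eapply exR_le; [|apply (Hr j)]. intros k. rewrite Rabs_Rabsolu. apply Ha.
    apply Series_le; auto. intros k; split; [apply Rabs_pos|apply Ha]. }
  assert (Hbo : ex_series (fun j => Series (b j))).
  { eapply ex_series_ext. intros j. unfold b. symmetry. apply Series_plus; auto.
    apply (ex_series_plus _ _ Hao Ho). }
  destruct (tonelli b Hb Hbr Hbo) as [T1 [T2 T3]].
  destruct (tonelli M HM Hr Ho) as [U1 [U2 U3]].
  assert (Ea : forall j, Series (a j) = Series (b j) - Series (M j)).
  { intros j. unfold b. rewrite Series_plus; auto. ring. }
  assert (Eak : forall k, Series (fun j => a j k) = Series (fun j => b j k) - Series (fun j => M j k)).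
  { intros k. rewrite <- Series_minus; auto. apply Series_ext. intros j; unfold b; ring. }
  rewrite (Series_ext _ _ Ea), (Series_ext _ _ Eak).
  rewrite !Series_minus; auto.
  rewrite T3, U3. reflexivity.
Qed.

Lemma Ceq (c d : C) : Re c = Re d -> Im c = Im d -> c = d.
Proof. destruct c, d; simpl; intros; subst; reflexivity. Qed.

Lemma Series_first (u : nat -> R) : (forall n, u (S n) = 0) -> Series u = u 0%nat.
Proof.
  intros H. apply is_series_unique.
  change (is_lim_seq (sum_n u) (u 0%nat)).
  apply is_lim_seq_ext with (fun _ => u 0%nat).
  - intros n. induction n. rewrite sum_O; auto.
    rewrite sum_Sn, <- IHn, H. unfold plus; simpl. ring.
  - apply is_lim_seq_const.
Qed.

Lemma CSeries_Re (a : nat -> C) : Re (CSeries a) = Series (fun k => Re (a k)).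
Proof. reflexivity. Qed.
Lemma CSeries_Im (a : nat -> C) : Im (CSeries a) = Series (fun k => Im (a k)).
Proof. reflexivity. Qed.

Definition okC (a : nat -> C) := ex_series (fun k => Re (a k)) /\ ex_series (fun k => Im (a k)).

Lemma CSeries_ext (a b : nat -> C) : (forall k, a k = b k) -> CSeries a = CSeries b.
Proof. intros H. unfold CSeries. rewrite (Series_ext _ _ (fun k => f_equal Re (H k))), (Series_ext _ _ (fun k => f_equal Im (H k))). reflexivity. Qed.

Lemma CSeries_first (a : nat -> C) : (forall n, a (S n) = 0%C) -> CSeries a = a 0%nat.
Proof.
  intros H. apply Ceq; rewrite ?CSeries_Re, ?CSeries_Im.
  - apply Series_first. intros n; rewrite H; reflexivity.
  - apply Series_first. intros n; rewrite H; reflexivity.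
Qed.

Lemma CSeries_scalR (r : R) (a : nat -> C) : CSeries (fun k => RtoC r * a k)%C = (RtoC r * CSeries a)%C.
Proof.
  apply Ceq.
  - rewrite re_scal_l. rewrite ?CSeries_Re, ?CSeries_Im. rewrite <- Series_scal_l. apply Series_ext. intros; apply re_scal_l.
  - rewrite im_scal_l. rewrite ?CSeries_Re, ?CSeries_Im. rewrite <- Series_scal_l. apply Series_ext. intros; apply im_scal_l.
Qed.

Lemma CSeries_constR (m : nat -> R) (c : C) : CSeries (fun k => RtoC (m k) * c)%C = (RtoC (Series m) * c)%C.
Proof.
  apply Ceq.
  - rewrite re_scal_l. rewrite ?CSeries_Re, ?CSeries_Im. rewrite <- Series_scal_r. apply Series_ext. intros; rewrite re_scal_l; ring.
  - rewrite im_scal_l. rewrite ?CSeries_Re, ?CSeries_Im. rewrite <- Series_scal_r. apply Series_ext. intros; rewrite im_scal_l; ring.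
Qed.

Lemma okC_dom (a : nat -> C) (M : nat -> R) : (forall k, Rabs (Re (a k)) <= M k /\ Rabs (Im (a k)) <= M k) ->
  ex_series M -> okC a.
Proof. intros H HM. split; eapply exR_le; try apply HM; intros k; apply H. Qed.

Lemma okC_scalR (r : R) (a : nat -> C) : okC a -> okC (fun k => RtoC r * a k)%C.
Proof.
  intros [H1 H2]. split.
  - eapply ex_series_ext. intros k; symmetry; apply re_scal_l. exact (@ex_series_scal_l R_AbsRing R_NormedModule r _ H1).
  - eapply ex_series_ext. intros k; symmetry; apply im_scal_l. exact (@ex_series_scal_l R_AbsRing R_NormedModule r _ H2).
Qed.

Lemma CSeries_plus (a b : nat -> C) : okC a -> okC b -> CSeries (fun k => a k + b k)%C = (CSeries a + CSeries b)%C.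
Proof.
  intros [Ha1 Ha2] [Hb1 Hb2]. apply Ceq.
  - change (Re (CSeries a + CSeries b)%C) with (Re (CSeries a) + Re (CSeries b)).
    rewrite !CSeries_Re, <- Series_plus; auto.
  - change (Im (CSeries a + CSeries b)%C) with (Im (CSeries a) + Im (CSeries b)).
    rewrite !CSeries_Im, <- Series_plus; auto.
Qed.

Lemma CSeries_scal (c : C) (a : nat -> C) : okC a -> CSeries (fun k => c * a k)%C = (c * CSeries a)%C.
Proof.
  intros [H1 H2]. apply Ceq; destruct c as [cr ci].
  - change (Re ((cr, ci) * CSeries a)%C) with (cr * Re (CSeries a) - ci * Im (CSeries a)).
    rewrite CSeries_Re, CSeries_Re, CSeries_Im.
    rewrite <- !Series_scal_l, <- Series_minus.
    apply Series_ext; intros; unfold Re, Im; simpl; ring.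
    exact (@ex_series_scal_l R_AbsRing R_NormedModule cr _ H1).
    exact (@ex_series_scal_l R_AbsRing R_NormedModule ci _ H2).
  - change (Im ((cr, ci) * CSeries a)%C) with (cr * Im (CSeries a) + ci * Re (CSeries a)).
    rewrite CSeries_Im, CSeries_Im, CSeries_Re.
    rewrite <- !Series_scal_l, <- Series_plus.
    apply Series_ext; intros; unfold Re, Im; simpl; ring.
    exact (@ex_series_scal_l R_AbsRing R_NormedModule cr _ H2).
    exact (@ex_series_scal_l R_AbsRing R_NormedModule ci _ H1).
Qed.

Lemma CSeries_shift (a : nat -> C) : okC a -> CSeries a = (a 0%nat + CSeries (fun k => a (S k)))%C.
Proof.
  intros [H1 H2]. apply Ceq.
  - change (Re (a 0%nat + CSeries (fun k => a (S k)))%C) with (Re (a 0%nat) + Re (CSeries (fun k => a (S k)))).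
    rewrite !CSeries_Re. apply Series_incr_1; auto.
  - change (Im (a 0%nat + CSeries (fun k => a (S k)))%C) with (Im (a 0%nat) + Im (CSeries (fun k => a (S k)))).
    rewrite !CSeries_Im. apply Series_incr_1; auto.
Qed.

Lemma CSeries_fubini (a : nat -> nat -> C) (M : nat -> nat -> R) :
  (forall j k, Rabs (Re (a j k)) <= M j k /\ Rabs (Im (a j k)) <= M j k) ->
  (forall j, ex_series (M j)) -> ex_series (fun j => Series (M j)) ->
  CSeries (fun k => CSeries (fun j => a j k)) = CSeries (fun j => CSeries (a j)).
Proof.
  intros H Hr Ho. apply Ceq; rewrite ?CSeries_Re, ?CSeries_Im.
  - apply (fubini (fun j k => Re (a j k)) M); auto. intros; apply H.
  - apply (fubini (fun j k => Im (a j k)) M); auto. intros; apply H.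
Qed.

Lemma Series_bound (u M : nat -> R) : (forall k, Rabs (u k) <= M k) -> ex_series M -> Rabs (Series u) <= Series M.
Proof.
  intros H HM. eapply Rle_trans. apply Series_Rabs. eapply exR_le; [|apply HM]. intros; rewrite Rabs_Rabsolu; auto.
  apply Series_le; auto. intros; split; [apply Rabs_pos| auto].
Qed.

Lemma im_le_Cmod (c : C) : Rabs (Im c) <= Cmod c.
Proof.
  unfold Cmod. rewrite <- sqrt_Rsqr_abs. apply sqrt_le_1_alt. unfold Rsqr. destruct c as [x y]; unfold Im; simpl.
  assert (0 <= x*x) by apply Rle_0_sqr. lra.
Qed.

Lemma sum_shift0 (u : nat -> R) K : sum_n u (S K) = u 0%nat + sum_n (fun k => u (S k)) K.
Proof.
  induction K.
  - rewrite sum_Sn, !sum_O. reflexivity.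
  - rewrite sum_Sn, IHK, (sum_Sn (fun k => u (S k))). unfold plus; simpl. ring.
Qed.

Lemma sum_lin (al be : R) (u v : nat -> R) K :
  sum_n (fun k => al * u k + be * v k) K = al * sum_n u K + be * sum_n v K.
Proof.
  induction K.
  - rewrite !sum_O. reflexivity.
  - rewrite !sum_Sn, IHK. unfold plus; simpl. ring.
Qed.

Lemma sum_scal (al : R) (u : nat -> R) K : sum_n (fun k => al * u k) K = al * sum_n u K.
Proof.
  induction K.
  - rewrite !sum_O. reflexivity.
  - rewrite !sum_Sn, IHK. unfold plus; simpl. ring.
Qed.

Lemma sum_zero K : sum_n (fun _ => 0) K = 0.
Proof. induction K. rewrite sum_O; auto. rewrite sum_Sn, IHK. unfold plus; simpl; ring. Qed.

Lemma term_le_sum (u : nat -> R) K k : (forall k, (k <= K)%nat -> 0 <= u k) -> (k <= K)%nat -> u k <= sum_n u K.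
Proof.
  revert k; induction K; intros k H Hk.
  - assert (k = 0%nat) by lia. subst. rewrite sum_O. lra.
  - rewrite sum_Sn. unfold plus; simpl.
    destruct (Nat.eq_dec k (S K)).
    + subst. assert (0 <= sum_n u K).
      { eapply Rle_trans; [apply (H 0%nat); lia|]. apply IHK; intros; try apply H; lia. }
      lra.
    + assert (u k <= sum_n u K) by (apply IHK; intros; try apply H; lia).
      specialize (H (S K) (le_n _)). lra.
Qed.

Definition wq (q : R) (j : nat) := (1 - q) * q ^ j.

Lemma wq_pos q j : 0 < q -> q < 1 -> 0 <= wq q j.
Proof. intros. unfold wq. apply Rmult_le_pos. lra. apply pow_le; lra. Qed.

Lemma wq_ex q : 0 < q -> q < 1 -> ex_series (wq q).
Proof.
  intros. unfold wq. apply (@ex_series_scal_l R_AbsRing R_NormedModule (1-q) (fun j => q ^ j)).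
  apply ex_series_geom. rewrite Rabs_pos_eq; lra.
Qed.

Lemma wq_sum q : 0 < q -> q < 1 -> Series (wq q) = 1.
Proof.
  intros. unfold wq. rewrite Series_scal_l, Series_geom. field. lra. rewrite Rabs_pos_eq; lra.
Qed.

Section Absorb.
Variables rho q : R.
Hypothesis Hrho : 0 < rho.
Hypothesis Hq0 : 0 < q.
Hypothesis Hq1 : q < 1.

Notation a := (absorb rho q).

Lemma absorb_S k n b : a (S k) n (S b) =
  rho / (1 + rho) * Series (fun j => wq q j * a k (n + S j)%nat (S b))
  + 1 / (1 + rho) * (INR n / INR (n + S b) * a k (Nat.pred n) (S b)
                    + INR (S b) / INR (n + S b) * a k n b).
Proof. reflexivity. Qed.

Lemma absorb_bd K : forall n b, (forall k, (k <= K)%nat -> 0 <= a k n b) /\ sum_n (fun k => a k n b) K <= 1.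
Proof.
  induction K; intros n b.
  - split.
    + intros k Hk. assert (k = 0%nat) by lia. subst. destruct b; simpl; lra.
    + rewrite sum_O. destruct b; simpl; lra.
  - assert (Hle : forall k n b, (k <= K)%nat -> 0 <= a k n b <= 1).
    { intros k n' b' Hk. destruct (IHK n' b') as [H1 H2]. split. auto.
      eapply Rle_trans; [|apply H2]. apply (term_le_sum (fun k => a k n' b')); auto. }
    assert (Hex : forall k n b, (k <= K)%nat -> ex_series (fun j => wq q j * a k (n + S j)%nat b)).
    { intros k n' b' Hk. eapply exR_le; [|apply (wq_ex q Hq0 Hq1)].
      intros j. rewrite Rabs_pos_eq. 
      - specialize (Hle k (n' + S j)%nat b' Hk). assert (0 <= wq q j) by (apply wq_pos; auto). nra.
      - apply Rmult_le_pos. apply wq_pos; auto. apply Hle; auto. }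
    assert (Hcpos : forall n b, 0 <= INR n / INR (n + S b)).
    { intros. apply Rdiv_le_0_compat. apply pos_INR. apply lt_0_INR. lia. }
    assert (Hcsum : forall n b, INR n / INR (n + S b) + INR (S b) / INR (n + S b) = 1).
    { intros. rewrite <- Rdiv_plus_distr, <- plus_INR. apply Rdiv_diag. apply not_0_INR. lia. }
    destruct b as [|b].
    + split.
      * intros k Hk. destruct k; simpl; lra.
      * rewrite sum_shift0. rewrite (sum_n_ext _ (fun _ => 0)); [|intros; reflexivity].
        rewrite sum_zero. simpl. lra.
    + split.
      * intros k Hk. destruct (Nat.eq_dec k (S K)).
        -- subst. rewrite absorb_S.
           assert (0 <= Series (fun j => wq q j * a K (n + S j)%nat (S b))).
           { apply ser_nonneg; auto. intros j. apply Rmult_le_pos. apply wq_pos; auto. apply Hle; auto. }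
           assert (0 <= rho / (1+rho)) by (apply Rdiv_le_0_compat; lra).
           assert (0 <= 1 / (1+rho)) by (apply Rdiv_le_0_compat; lra).
           assert (0 <= INR n / INR (n + S b) * a K (Nat.pred n) (S b)).
           { apply Rmult_le_pos; auto. apply Hle; auto. }
           assert (0 <= INR (S b) / INR (n + S b) * a K n b).
           { apply Rmult_le_pos. apply Rdiv_le_0_compat. apply pos_INR. apply lt_0_INR. lia. apply Hle; auto. }
           apply Rplus_le_le_0_compat; apply Rmult_le_pos; auto. lra.
        -- apply IHK. lia.
      * rewrite sum_shift0.
        rewrite (sum_n_ext _ (fun k => rho / (1 + rho) * Series (fun j => wq q j * a k (n + S j)%nat (S b))
          + 1 / (1 + rho) * (INR n / INR (n + S b) * a k (Nat.pred n) (S b)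
                    + INR (S b) / INR (n + S b) * a k n b))); [|intros; apply absorb_S].
        rewrite sum_lin.
        rewrite (sum_lin (INR n / INR (n + S b)) (INR (S b) / INR (n + S b)) (fun k => a k (Nat.pred n) (S b)) (fun k => a k n b)).
        destruct (Series_sum_n (fun j k => wq q j * a k (n + S j)%nat (S b)) K) as [_ HS].
        { intros k Hk. apply Hex; auto. }
        rewrite <- HS.
        assert (HY : Series (fun j => sum_n (fun k => wq q j * a k (n + S j)%nat (S b)) K) <= 1).
        { rewrite <- (wq_sum q Hq0 Hq1). apply Series_le. 2: apply wq_ex; auto.
          intros j. rewrite sum_scal. destruct (IHK (n + S j)%nat (S b)) as [H1 H2].
          assert (0 <= sum_n (fun k => a k (n + S j)%nat (S b)) K).
          { eapply Rle_trans; [apply (H1 0%nat); lia|]. apply (term_le_sum (fun k => a k (n + S j)%nat (S b))); auto. lia. }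
          assert (0 <= wq q j) by (apply wq_pos; auto).
          split; nra. }
        destruct (IHK (Nat.pred n) (S b)) as [_ HA].
        destruct (IHK n b) as [_ HB].
        assert (0 <= rho / (1+rho)) by (apply Rdiv_le_0_compat; lra).
        assert (0 <= 1 / (1+rho)) by (apply Rdiv_le_0_compat; lra).
        assert (E1 : rho / (1+rho) + 1 / (1+rho) = 1) by (field; lra).
        specialize (Hcpos n b). specialize (Hcsum n b).
        assert (0 <= INR (S b) / INR (n + S b)) by (apply Rdiv_le_0_compat; [apply pos_INR| apply lt_0_INR; lia]).
        simpl (a 0%nat n (S b)).
        assert (X1 : INR n / INR (n + S b) * sum_n (fun k => a k (Nat.pred n) (S b)) K
           + INR (S b) / INR (n + S b) * sum_n (fun k => a k n b) K <= 1) by nra.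
        nra.
Qed.
End Absorb.

Lemma RC_term_bd (x : R) (c : C) : 0 <= x -> Cmod c <= 1 ->
  Rabs (Re (RtoC x * c)%C) <= x /\ Rabs (Im (RtoC x * c)%C) <= x.
Proof.
  intros Hx Hc. rewrite re_scal_l, im_scal_l, !Rabs_mult, (Rabs_pos_eq x Hx).
  assert (H1 := re_le_Cmod c). assert (H2 := im_le_Cmod c).
  assert (0 <= Rabs (Re c)) by apply Rabs_pos. assert (0 <= Rabs (Im c)) by apply Rabs_pos.
  split; nra.
Qed.

Section Estar.
Variables rho q : R.
Variable s : C.
Hypothesis Hrho : 0 < rho.
Hypothesis Hq0 : 0 < q.
Hypothesis Hq1 : q < 1.
Hypothesis Hs : 0 <= Re s.

Notation a := (absorb rho q).
Notation e := (estar rho q s).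
Let z := (RtoC (1 + rho) / (RtoC (1 + rho) + s))%C.

Lemma Dnz : (RtoC (1 + rho) + s)%C <> 0%C.
Proof.
  intros H. apply (f_equal Re) in H. change (Re (RtoC (1 + rho) + s)%C) with (Re (RtoC (1+rho)) + Re s) in H.
  rewrite re_RtoC in H. unfold Re in H at 2. simpl in H. lra.
Qed.

Lemma z_mod : Cmod z <= 1.
Proof.
  unfold z. rewrite Cmod_div by apply Dnz. rewrite Cmod_R, Rabs_pos_eq by lra.
  assert (H := re_le_Cmod (RtoC (1 + rho) + s)%C).
  change (Re (RtoC (1 + rho) + s)%C) with (Re (RtoC (1+rho)) + Re s) in H.
  rewrite re_RtoC in H. rewrite Rabs_pos_eq in H by lra.
  apply Rle_div_l. lra. lra.
Qed.

Lemma zk_mod k : Cmod (Cpow z k) <= 1.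
Proof.
  induction k. simpl. rewrite Cmod_1. lra.
  simpl. rewrite Cmod_mult. assert (H := z_mod). assert (0 <= Cmod z) by apply Cmod_ge_0.
  assert (0 <= Cmod (Cpow z k)) by apply Cmod_ge_0. nra.
Qed.

Lemma a_ser n b : (forall k, 0 <= a k n b) /\ ex_series (fun k => a k n b) /\ Series (fun k => a k n b) <= 1.
Proof.
  assert (Hp : forall k, 0 <= a k n b).
  { intros k. apply (absorb_bd rho q Hrho Hq0 Hq1 k n b). lia. }
  destruct (ser_bound (fun k => a k n b) 1 Hp) as [H1 H2].
  { intros N. apply absorb_bd; auto. }
  auto.
Qed.

Lemma e_term_bd n b k : Rabs (Re (RtoC (a k n b) * Cpow z k)%C) <= a k n b /\
   Rabs (Im (RtoC (a k n b) * Cpow z k)%C) <= a k n b.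
Proof. apply RC_term_bd. apply a_ser. apply zk_mod. Qed.

Lemma e_ok n b : okC (fun k => RtoC (a k n b) * Cpow z k)%C.
Proof. eapply okC_dom. intros k; apply e_term_bd. apply a_ser. Qed.

Lemma e_bd n b : Rabs (Re (e n b)) <= 1 /\ Rabs (Im (e n b)) <= 1.
Proof.
  destruct (a_ser n b) as [H1 [H2 H3]].
  unfold estar. fold z. rewrite CSeries_Re, CSeries_Im. split.
  - eapply Rle_trans; [apply Series_bound|apply H3]; auto. intros k; apply e_term_bd.
  - eapply Rle_trans; [apply Series_bound|apply H3]; auto. intros k; apply e_term_bd.
Qed.

Lemma e00 : e 0 0 = 1%C.
Proof.
  unfold estar. rewrite CSeries_first.
  - simpl. apply Ceq; unfold Re, Im; simpl; ring.
  - intros n. simpl. apply Ceq; unfold Re, Im; simpl; ring.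
Qed.

Lemma rec0 b : ((RtoC (1 + rho) + s) * e 0 (S b) =
   RtoC rho * CSeries (fun j => RtoC (wq q j) * e (S j) (S b)) + e 0 b)%C.
Proof.
  set (M := fun j k => wq q j * a k (S j) (S b)).
  set (Y := fun k => Series (fun j => M j k)).
  assert (HMp : forall j k, 0 <= M j k).
  { intros j k. unfold M. apply Rmult_le_pos. apply wq_pos; auto. apply a_ser. }
  assert (HMr : forall j, ex_series (M j)).
  { intros j. unfold M. apply (@ex_series_scal_l R_AbsRing R_NormedModule (wq q j) (fun k => a k (S j) (S b))). apply a_ser. }
  assert (HMo : ex_series (fun j => Series (M j))).
  { eapply exR_le; [|apply (wq_ex q Hq0 Hq1)]. intros j. unfold M. rewrite Series_scal_l.
    destruct (a_ser (S j) (S b)) as [H1 [H2 H3]].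
    assert (0 <= Series (fun k => a k (S j) (S b))) by (apply ser_nonneg; auto).
    assert (0 <= wq q j) by (apply wq_pos; auto).
    rewrite Rabs_pos_eq by nra. nra. }
  destruct (tonelli M HMp HMr HMo) as [T1 [T2 T3]].
  assert (HYp : forall k, 0 <= Y k) by (intros k; apply ser_nonneg; auto).
  assert (S1 : e 0 (S b) = (z * CSeries (fun k => RtoC (a (S k) 0 (S b)) * Cpow z k))%C).
  { unfold estar. fold z. rewrite CSeries_shift by apply e_ok.
    rewrite <- CSeries_scal.
    - simpl (a 0 0 (S b)). rewrite Cmult_0_l, Cplus_0_l. apply CSeries_ext. intros k. simpl (Cpow z (S k)). ring.
    - eapply okC_dom. intros k. apply RC_term_bd. apply a_ser. apply zk_mod.
      apply (proj1 (ex_series_incr_1 (fun k => a k 0 (S b)))). apply a_ser. }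
  assert (S2 : forall k, a (S k) 0 (S b) = rho / (1 + rho) * Y k + 1 / (1 + rho) * a k 0 b).
  { intros k. rewrite absorb_S. change (INR 0) with 0. change (Nat.pred 0) with 0%nat.
    change ((0 + S b)%nat) with (S b).
    change (fun j => wq q j * a k (0 + S j)%nat (S b)) with (fun j => M j k).
    fold (Y k). assert (INR (S b) <> 0) by (apply not_0_INR; lia). field. split; lra. }
  assert (S3 : CSeries (fun k => RtoC (a (S k) 0 (S b)) * Cpow z k)%C =
     (RtoC (rho / (1 + rho)) * CSeries (fun k => RtoC (Y k) * Cpow z k)
      + RtoC (1 / (1 + rho)) * e 0 b)%C).
  { rewrite (CSeries_ext _ (fun k => RtoC (rho / (1 + rho)) * (RtoC (Y k) * Cpow z k)
        + RtoC (1 / (1 + rho)) * (RtoC (a k 0 b) * Cpow z k))%C).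
    - rewrite CSeries_plus.
      + rewrite !CSeries_scalR. reflexivity.
      + apply okC_scalR. eapply okC_dom; [|apply T2]. intros k. apply RC_term_bd; [apply (HYp k)|apply zk_mod].
      + apply okC_scalR. apply e_ok.
    - intros k. rewrite S2, RtoC_plus, !RtoC_mult. ring. }
  assert (S4 : CSeries (fun k => RtoC (Y k) * Cpow z k)%C = CSeries (fun j => RtoC (wq q j) * e (S j) (S b))%C).
  { rewrite (CSeries_ext _ (fun k => CSeries (fun j => RtoC (M j k) * Cpow z k)%C)).
    2: { intros k. rewrite CSeries_constR. reflexivity. }
    rewrite (CSeries_fubini (fun j k => RtoC (M j k) * Cpow z k)%C M); auto.
    - apply CSeries_ext. intros j. unfold estar. fold z. rewrite <- CSeries_scalR.
      apply CSeries_ext. intros k. unfold M. rewrite RtoC_mult. ring.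
    - intros j k. apply RC_term_bd; auto. apply zk_mod. }
  rewrite S1, S3, S4. unfold z.
  assert (H1 : RtoC (1 + rho) <> 0%C) by (intros H; apply RtoC_inj in H; lra).
  rewrite !RtoC_div by lra. assert (Hd := Dnz).
  field. split; auto.
Qed.

End Estar.

Definition summable (g : nat -> nat -> R) :=
  (forall n, ex_series (fun b => Rabs (g n b))) /\ ex_series (fun n => Series (fun b => Rabs (g n b))).

Lemma Ebd_ok (c : nat -> C) (m : nat -> R) : (forall b, Rabs (Re (c b)) <= 1 /\ Rabs (Im (c b)) <= 1) ->
  ex_series (fun b => Rabs (m b)) -> okC (fun b => c b * RtoC (m b))%C.
Proof.
  intros H Hm. eapply okC_dom; [|apply Hm]. intros b. rewrite re_scal_r, im_scal_r, !Rabs_mult.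
  destruct (H b). assert (0 <= Rabs (m b)) by apply Rabs_pos.
  assert (0 <= Rabs (Re (c b))) by apply Rabs_pos. assert (0 <= Rabs (Im (c b))) by apply Rabs_pos.
  split; nra.
Qed.

Section Main.
Variables rho q : R.
Variable s : C.
Hypothesis Hrho : 0 < rho.
Hypothesis Hq0 : 0 < q.
Hypothesis Hq1 : q < 1.
Hypothesis Hrq : rho + q < 1.
Hypothesis Hs : 0 <= Re s.

Notation e := (estar rho q s).

Definition SG (g : nat -> nat -> R) : C :=
  CSeries (fun n => CSeries (fun b => e n (S b) * RtoC (g n b)))%C.

Lemma inner_ok g n : summable g -> okC (fun b => e n (S b) * RtoC (g n b))%C.
Proof. intros [H1 H2]. apply Ebd_ok; auto. intros b; apply e_bd; auto. Qed.

Lemma outer_ok g : summable g -> okC (fun n => CSeries (fun b => e n (S b) * RtoC (g n b)))%C.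
Proof.
  intros [H1 H2]. eapply okC_dom; [|apply H2]. intros n.
  rewrite CSeries_Re, CSeries_Im. split; apply Series_bound; auto; intros b;
  rewrite ?re_scal_r, ?im_scal_r, Rabs_mult; destruct (e_bd rho q s Hrho Hq0 Hq1 Hs n (S b));
  assert (0 <= Rabs (g n b)) by apply Rabs_pos;
  assert (0 <= Rabs (Re (e n (S b)))) by apply Rabs_pos; assert (0 <= Rabs (Im (e n (S b)))) by apply Rabs_pos; nra.
Qed.

Lemma SG_lin (g g1 g2 : nat -> nat -> R) (al be : R) :
  summable g1 -> summable g2 -> (forall n b, g n b = al * g1 n b + be * g2 n b) ->
  SG g = (RtoC al * SG g1 + RtoC be * SG g2)%C.
Proof.
  intros H1 H2 Hg. unfold SG.
  rewrite <- !CSeries_scalR, <- CSeries_plus.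
  - apply CSeries_ext. intros n. rewrite <- !CSeries_scalR, <- CSeries_plus.
    + apply CSeries_ext. intros b. rewrite Hg, RtoC_plus, !RtoC_mult. ring.
    + apply okC_scalR, inner_ok; auto.
    + apply okC_scalR, inner_ok; auto.
  - apply okC_scalR, outer_ok; auto.
  - apply okC_scalR, outer_ok; auto.
Qed.

Lemma geomS_ex : ex_series (fun b => q ^ S b).
Proof.
  apply (@ex_series_scal_l R_AbsRing R_NormedModule q (fun b => q ^ b)).
  apply ex_series_geom. rewrite Rabs_pos_eq; lra.
Qed.

Lemma sumg (x : R) : 0 <= x < 1 -> summable (fun n b => x ^ n * q ^ S b).
Proof.
  intros Hx.
  assert (Ha : forall n b, Rabs (x ^ n * q ^ S b) = x ^ n * q ^ S b).
  { intros. apply Rabs_pos_eq. apply Rmult_le_pos; apply pow_le; lra. }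
  split.
  - intros n. eapply ex_series_ext. intros b; symmetry; apply Ha.
    apply (@ex_series_scal_l R_AbsRing R_NormedModule (x ^ n) (fun b => q ^ S b)). apply geomS_ex.
  - eapply ex_series_ext. intros n. rewrite (Series_ext _ _ (Ha n)). symmetry. apply Series_scal_l.
    apply (ex_series_scal_r _ (fun n => x ^ n)). apply ex_series_geom. rewrite Rabs_pos_eq; lra.
Qed.

Definition E0' := CSeries (fun b => e 0 (S b) * RtoC (q ^ S b))%C.
Definition Rest := CSeries (fun j => CSeries (fun b => e (S j) (S b) * RtoC (q ^ S j * q ^ S b)))%C.

Lemma E0_eq : SG (fun n b => 0 ^ n * q ^ S b) = E0'.
Proof.
  unfold SG, E0'. rewrite CSeries_first.
  - apply CSeries_ext. intros b. simpl pow at 1. rewrite Rmult_1_l. reflexivity.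
  - intros n. rewrite (CSeries_ext _ (fun _ => 0%C)).
    + rewrite CSeries_first; reflexivity.
    + intros b. simpl pow at 1. rewrite Rmult_0_l, Rmult_0_l. apply Ceq; unfold Re, Im; simpl; ring.
Qed.

Lemma Eqq_split : SG (fun n b => q ^ n * q ^ S b) = (E0' + Rest)%C.
Proof.
  unfold SG. rewrite CSeries_shift.
  - f_equal. unfold E0'. apply CSeries_ext. intros b. simpl pow at 1. rewrite Rmult_1_l. reflexivity.
  - apply outer_ok. apply sumg. lra.
Qed.

Lemma Rb_bd b : Rabs (Re (CSeries (fun j => RtoC (wq q j) * e (S j) (S b))%C)) <= 1 /\
                Rabs (Im (CSeries (fun j => RtoC (wq q j) * e (S j) (S b))%C)) <= 1.
Proof.
  rewrite CSeries_Re, CSeries_Im, <- (wq_sum q Hq0 Hq1).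
  assert (Hw : forall j, Rabs (wq q j) = wq q j) by (intros j; apply Rabs_pos_eq, wq_pos; auto).
  split; apply Series_bound; try apply wq_ex; auto; intros j;
  rewrite ?re_scal_l, ?im_scal_l, Rabs_mult, Hw;
  destruct (e_bd rho q s Hrho Hq0 Hq1 Hs (S j) (S b)); assert (0 <= wq q j) by (apply wq_pos; auto);
  assert (0 <= Rabs (Re (e (S j) (S b)))) by apply Rabs_pos;
  assert (0 <= Rabs (Im (e (S j) (S b)))) by apply Rabs_pos; nra.
Qed.

Lemma rec_sum : ((RtoC (1 + rho) + s) * E0' =
   RtoC rho * (RtoC ((1 - q) / q) * Rest) + (RtoC q + RtoC q * E0'))%C.
Proof.
  assert (Hqa : ex_series (fun b => Rabs (q ^ S b))).
  { eapply ex_series_ext; [|apply geomS_ex]. intros b. rewrite Rabs_pos_eq; auto. apply pow_le; lra. }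
  unfold E0'. rewrite <- CSeries_scal.
  2: { apply Ebd_ok; auto. intros b; apply e_bd; auto. }
  rewrite (CSeries_ext _ (fun b => RtoC rho * (CSeries (fun j => RtoC (wq q j) * e (S j) (S b)) * RtoC (q ^ S b))
      + e 0 b * RtoC (q ^ S b))%C).
  2: { intros b. rewrite Cmult_assoc, rec0; auto. ring. }
  rewrite CSeries_plus.
  2: { apply okC_scalR. apply Ebd_ok; auto. intros b; apply Rb_bd. }
  2: { apply Ebd_ok; auto. intros b; apply e_bd; auto. }
  rewrite CSeries_scalR. f_equal. f_equal.
  -
    rewrite (CSeries_ext _ (fun b => CSeries (fun j => RtoC (wq q j * q ^ S b) * e (S j) (S b)))%C).
    2: { intros b. rewrite Cmult_comm, <- CSeries_scalR. apply CSeries_ext. intros j.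
         rewrite RtoC_mult. ring. }
    rewrite (CSeries_fubini (fun j b => RtoC (wq q j * q ^ S b) * e (S j) (S b))%C (fun j b => wq q j * q ^ S b)).
    + unfold Rest. rewrite <- CSeries_scalR. apply CSeries_ext. intros j.
      rewrite <- CSeries_scalR. apply CSeries_ext. intros b.
      replace (wq q j * q ^ S b) with ((1 - q) / q * (q ^ S j * q ^ S b)).
      2: { unfold wq. simpl. field. lra. }
      rewrite (RtoC_mult ((1 - q) / q)). ring.
    + intros j b. rewrite re_scal_l, im_scal_l, !(Rabs_mult (wq q j * q ^ S b)), (Rabs_pos_eq (wq q j * q ^ S b)).
      2: { apply Rmult_le_pos. apply wq_pos; auto. apply pow_le; lra. }
      assert (0 <= Rabs (Re (e (S j) (S b)))) by apply Rabs_pos.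
      assert (0 <= Rabs (Im (e (S j) (S b)))) by apply Rabs_pos.
      destruct (e_bd rho q s Hrho Hq0 Hq1 Hs (S j) (S b)).
      assert (0 <= wq q j * q ^ S b) by (apply Rmult_le_pos; [apply wq_pos; auto | apply pow_le; lra]).
      split; nra.
    + intros j. apply (@ex_series_scal_l R_AbsRing R_NormedModule (wq q j) (fun b => q ^ S b)). apply geomS_ex.
    + eapply ex_series_ext. intros j. symmetry. apply Series_scal_l.
      apply (ex_series_scal_r _ (wq q)). apply wq_ex; auto.
  -
    rewrite CSeries_shift.
    2: { apply Ebd_ok; auto. intros b; apply e_bd; auto. }
    rewrite e00, <- CSeries_scalR. f_equal.
    + simpl. rewrite Rmult_1_r. ring.
    + apply CSeries_ext. intros b. change (q ^ S (S b)) with (q * q ^ S b). rewrite RtoC_mult. ring.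
Qed.

End Main.

Theorem mainTheorem1 (rho q : R) (s : C) :
  0 < rho -> 0 < q -> q < 1 -> rho + q < 1 -> 0 <= Re s ->
  sojournLT rho q s =
  (RtoC ((1 - rho - q) / (q * (rho + q))) *
   (RtoC (rho ^ 2) * Fgen rho q s (RtoC (rho + q)) (RtoC q)
    + (RtoC (q ^ 3)
       + RtoC rho * (RtoC q * s + RtoC rho + RtoC (2 * q * (1 - q)))
         * Egen rho q s (RtoC q) (RtoC q))
      / (RtoC q + RtoC rho + RtoC q * s - RtoC (q ^ 2))))%C.
Proof.
  intros Hrho Hq0 Hq1 Hrq Hs.
  set (K := (1 - rho - q) / (q * (rho + q))).
  assert (Hsoj : sojournLT rho q s = SG rho q s (fun n b => probN rho q n * probB q (S b))).
  { unfold sojournLT, SG. apply CSeries_ext; intro n; apply CSeries_ext; intro b. rewrite RtoC_mult. ring. }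
  assert (HEg : forall x, Egen rho q s (RtoC x) (RtoC q) = SG rho q s (fun n b => x ^ n * q ^ S b)).
  { intros x. unfold Egen, SG. apply CSeries_ext; intro n; apply CSeries_ext; intro b.
    rewrite <- !RtoC_pow, RtoC_mult. ring. }
  assert (Hlin : SG rho q s (fun n b => probN rho q n * probB q (S b)) =
     (RtoC (K * q) * SG rho q s (fun n b => (0 ^ n * q ^ S b)%R)
      + RtoC (K * rho) * SG rho q s (fun n b => ((rho + q) ^ n * q ^ S b)%R))%C).
  { apply SG_lin; auto; [eapply sumg; try eassumption; lra | eapply sumg; try eassumption; lra | ].
    intros n b. unfold K. destruct n; simpl probN; simpl probB; simpl pow; field; repeat split; lra. }
  rewrite E0_eq in Hlin by auto.
  unfold Fgen. destruct (excluded_middle_informative _) as [Heq|Hne].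
  { exfalso. apply (f_equal Re) in Heq. rewrite !re_RtoC in Heq. lra. }
  rewrite !HEg, Hsoj, Hlin, Eqq_split by (auto; lra).
  assert (Hrec := rec_sum rho q s Hrho Hq0 Hq1 Hs).
  generalize dependent (E0' rho q s). generalize dependent (Rest rho q s).
  generalize (SG rho q s (fun n b => (rho + q) ^ n * q ^ S b)).
  intros Er R0 E0 Hrec.
  assert (Hqn : RtoC q <> 0%C) by (intros H; apply (f_equal Re) in H; rewrite re_RtoC in H; unfold Re in H; simpl in H; lra).
  assert (Hrn : RtoC rho <> 0%C) by (intros H; apply (f_equal Re) in H; rewrite re_RtoC in H; unfold Re in H; simpl in H; lra).
  assert (H1q : RtoC (1 - q) <> 0%C) by (intros H; apply (f_equal Re) in H; rewrite re_RtoC in H; unfold Re in H; simpl in H; lra).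
  assert (Hrq' : RtoC (rho + q) <> 0%C) by (intros H; apply (f_equal Re) in H; rewrite re_RtoC in H; unfold Re in H; simpl in H; lra).
  assert (HD : (RtoC q + RtoC rho + RtoC q * s - RtoC (q ^ 2))%C <> 0%C).
  { intros H. apply (f_equal Re) in H.
    change (Re (RtoC q + RtoC rho + RtoC q * s - RtoC (q ^ 2))%C) with
      (Re (RtoC q) + Re (RtoC rho) + Re (RtoC q * s)%C - Re (RtoC (q ^ 2))) in H.
    rewrite re_scal_l, !re_RtoC in H. nra. }
  intros Hr2.
  assert (Hqq : RtoC ((1 - q) / q) <> 0%C).
  { intros H; apply (f_equal Re) in H; rewrite re_RtoC in H; unfold Re in H; simpl in H.
    assert ((1 - q) / q > 0) by (apply Rdiv_lt_0_compat; lra). lra. }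
  assert (HR : R0 = ((((RtoC (1 + rho) + s) * E0 - (RtoC q + RtoC q * E0)) / (RtoC rho * RtoC ((1 - q) / q))))%C).
  { rewrite Hr2. field. split; auto. }
  rewrite HR. unfold K.
  rewrite !RtoC_mult, !RtoC_div, !RtoC_minus, !RtoC_plus, !RtoC_mult, !RtoC_pow.
  all: try lra.
  2: { intros H. apply Rmult_integral in H. lra. }
  rewrite !RtoC_pow in HD.
  field.
  cbv beta. repeat split; auto.
  rewrite <- RtoC_minus. auto.
Qed.
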